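(* Let $\mathbf{c}\in\mathbb{R}^n$, $\mathcal{K}=\{1,\dots,K\}$ with $K\ge2$, and for each $k\in\mathcal{K}$ let $\mathcal{F}_k=\bigcup_{i\in\mathcal{D}_k}\mathcal{C}_{ki}$ with $\mathcal{D}_k$ finite and each $\mathcal{C}_{ki}\subset\mathbb{R}^n$ compact and convex. Let $$z^{HR}_{\mathcal{K}}=\inf\{\mathbf{c}^\top\mathbf{x}:\ \mathbf{x}=\mathbf{v}_k,\ \mathbf{v}_k\in\operatorname{cl}\operatorname{conv}(\mathcal{F}_k)\ \forall k\in\mathcal{K}\}$$ be the hull relaxation value and let $\boldsymbol{\lambda}_1^*,\dots,\boldsymbol{\lambda}_K^*$ be optimal Lagrange multipliers of this hull relaxation for the constraints $\mathbf{x}=\mathbf{v}_k$. For two disjunctions, which after relabeling are $k=K-1$ and $l=K$, let the basic step replace $\mathcal{F}_{K-1}$ and $\mathcal{F}_K$ by the single disjunction $\mathcal{F}_{K-1}\cap\mathcal{F}_K=\bigcup_{i\in\mathcal{D}_{K-1},\,j\in\mathcal{D}_K}(\mathcal{C}_{K-1,i}\cap\mathcal{C}_{K,j})$, and let $$z'=\inf\{\mathbf{c}^\top\mathbf{x}:\ \mathbf{x}\in\operatorname{cl}\operatorname{conv}(\mathcal{F}_k)\ \forall k\le K-2,\ \mathbf{x}\in\operatorname{cl}\operatorname{conv}(\mathcal{F}_{K-1}\cap\mathcal{F}_K)\}$$ be the hull relaxation value after the basic step, with bound improvement $\Delta(K-1,K)=z'-z^{HR}_{\mathcal{K}}$. Then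 $$\Delta(K-1,K)\ \ge\ L_{\{\{1\},\dots,\{K-2\},\{K-1,K\}\}}\big(\boldsymbol{\lambda}_1^*,\dots,\boldsymbol{\lambda}_{K-2}^*,\boldsymbol{\lambda}_{K-1}^*+\boldsymbol{\lambda}_K^*\big)-LR_{\mathcal{K}}(\boldsymbol{\lambda}_1^*,\dots,\boldsymbol{\lambda}_K^* )\ \ge\ 0.$$
   Context: $\operatorname{cl}\operatorname{conv}$ is the closed convex hull. Optimal Lagrange multipliers of the hull relaxation means: $z^{HR}_{\mathcal{K}}$ is finite and equals $\inf\{(\mathbf{c}-\sum_k\boldsymbol{\lambda}_k^* )^\top\mathbf{x}+\sum_k\boldsymbol{\lambda}_k^{*\top}\mathbf{v}_k:\mathbf{x}\in\mathbb{R}^n,\mathbf{v}_k\in\operatorname{cl}\operatorname{conv}(\mathcal{F}_k)\}$. The Lagrangian relaxation is $LR_{\mathcal{K}}(\boldsymbol{\lambda}_1,\dots,\boldsymbol{\lambda}_K)=\inf\{(\mathbf{c}-\sum_k\boldsymbol{\lambda}_k)^\top\mathbf{x}+\sum_k\boldsymbol{\lambda}_k^\top\mathbf{v}_k:\mathbf{x}\in\mathbb{R}^n,\ \mathbf{v}_k\in\mathcal{F}_k\ \forall k\}$. For a partition $\mathcal{P}=\{\mathcal{J}_1,\dots,\mathcal{J}_P\}$ of $\mathcal{K}$ and $\boldsymbol{\mu}_p\in\mathbb{R}^n$, the partition relaxation is $L_{\mathcal{P}}(\boldsymbol{\mu}_1,\dots,\boldsymbol{\mu}_P)=\sum_{p=1}^P\min\{\boldsymbol{\mu}_p^\top\mathbf{v}:\mathbf{v}\in\bigcap_{k\in\mathcal{J}_p}\mathcal{F}_k\}$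 (minimum over the empty set is $+\infty$). *)

(* Defs.v *)
From HB Require Import structures.
From mathcomp Require Import all_boot all_order all_algebra.
From mathcomp Require Import all_classical all_reals all_analysis.
Set Implicit Arguments. Unset Strict Implicit. Unset Printing Implicit Defensive.
Import Order.TTheory GRing.Theory Num.Theory.
Import numFieldNormedType.Exports.
Local Open Scope classical_set_scope.
Local Open Scope ring_scope.

Section Defs.
Variables (R : realType) (n : nat).
Notation vec := 'rV[R]_n.

Definition dotv (u v : vec) : R := \sum_(i < n) u 0 i * v 0 i.

Definition conv_hull (A : set vec) : set vec :=
  [set x | exists (m : nat) (w : 'I_m -> R) (p : 'I_m -> vec),
      (forall i, 0 <= w i) /\ \sum_(i < m) w i = 1 /\
      (forall i, A (p i)) /\ x = \sum_(i < m) w i *: p i].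

Definition clconv (A : set vec) : set vec := closure (conv_hull A).

(* the disjunctive set F_k = \bigcup_{i in D_k} C_{ki}, with D_k = 'I_(m k) *)
Definition disj (K : nat) (m : 'I_K -> nat)
  (C : forall k : 'I_K, 'I_(m k) -> set vec) (k : 'I_K) : set vec :=
  [set v | exists i : 'I_(m k), C k i v].

Definition zHR (K : nat) (c : vec) (F : 'I_K -> set vec) : \bar R :=
  ereal_inf [set e | exists (x : vec) (v : 'I_K -> vec),
     (forall k, x = v k /\ clconv (F k) (v k)) /\ e = (dotv c x)%:E].

(* Lagrangian function of the hull relaxation, dualizing x = v_k *)
Definition HRLag (K : nat) (c : vec) (F : 'I_K -> set vec)
   (lam : 'I_K -> vec) : \bar R :=
  ereal_inf [set e | exists (x : vec) (v : 'I_K -> vec),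
     (forall k, clconv (F k) (v k)) /\
     e = (dotv (c - \sum_(k < K) lam k) x + \sum_(k < K) dotv (lam k) (v k))%:E].

Definition optimal_multipliers (K : nat) (c : vec) (F : 'I_K -> set vec)
   (lam : 'I_K -> vec) : Prop :=
  zHR c F \is a fin_num /\ zHR c F = HRLag c F lam.

Definition LR (K : nat) (c : vec) (F : 'I_K -> set vec)
   (lam : 'I_K -> vec) : \bar R :=
  ereal_inf [set e | exists (x : vec) (v : 'I_K -> vec),
     (forall k, F k (v k)) /\
     e = (dotv (c - \sum_(k < K) lam k) x + \sum_(k < K) dotv (lam k) (v k))%:E].

(* partition relaxation L_P(mu) for a partition P of 'I_K (a set of blocks);
   mu assigns a vector to each block; min over the empty set is +oo
   (ereal_inf set0 = +oo). *)
Definition Lpart (K : nat) (F : 'I_K -> set vec) (P : {set {set 'I_K}})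
   (mu : {set 'I_K} -> vec) : \bar R :=
  (\sum_(J in P)
     ereal_inf [set e | exists v : vec,
        (forall k, k \in J -> F k v) /\ e = (dotv (mu J) v)%:E])%E.

Definition zBasic (K : nat) (c : vec) (F : 'I_K -> set vec) (k0 l0 : 'I_K)
   : \bar R :=
  ereal_inf [set e | exists x : vec,
     (forall k, k != k0 -> k != l0 -> clconv (F k) x) /\
     clconv (F k0 `&` F l0) x /\ e = (dotv c x)%:E].

Definition basic_partition (K : nat) (k0 l0 : 'I_K) : {set {set 'I_K}} :=
  ([set [set k] | k in ~: [set k0; l0]] :|: [set [set k0; l0]])%SET.

End Defs.

(* Main.v *)
Require Import Defs.
From HB Require Import structures.
From mathcomp Require Import all_boot all_order all_algebra.
From mathcomp Require Import all_classical all_reals all_analysis.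
Import Order.TTheory GRing.Theory Num.Theory.
Import numFieldNormedType.Exports.

From mathcomp Require Import lra.
Set Implicit Arguments. Unset Strict Implicit.
Local Open Scope ring_scope.
Definition blk {K : nat} (k0 l0 k : 'I_K) : {set 'I_K} :=
  if k \in [set k0; l0] then [set k0; l0] else [set k].

Lemma blk_in (K : nat) (k0 l0 k : 'I_K) : blk k0 l0 k \in basic_partition k0 l0.
Proof.
rewrite /blk /basic_partition; case: ifP => kB; rewrite finset.in_setU.
  by rewrite finset.in_set1 eqxx orbT.
by apply/orP; left; apply/imsetP; exists k => //; rewrite finset.in_setC kB.
Qed.

Lemma blk_self (K : nat) (k0 l0 k : 'I_K) : k \in blk k0 l0 k.
Proof. by rewrite /blk; case: ifP => // _; rewrite finset.in_set1. Qed.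

Lemma blk_eq (K : nat) (k0 l0 : 'I_K) J k : J \in basic_partition k0 l0 ->
  (blk k0 l0 k == J) = (k \in J).
Proof.
rewrite /blk /basic_partition finset.in_setU finset.in_set1 => /orP[/imsetP[j jB ->]|/eqP ->].
  rewrite finset.in_setC in jB; case: ifP => kB.
    apply/idP/idP => [/eqP E|]; last by rewrite finset.in_set1 => /eqP E; rewrite -E kB in jB.
    by have := finset.setU11 k0 [set l0]; rewrite E finset.in_set1 => /eqP E'; 
       move: jB; rewrite -E' !inE eqxx.
  rewrite finset.in_set1; apply/eqP/eqP => [E|->] //.
  by have := finset.set11 k; rewrite E finset.in_set1 => /eqP.
case: ifP => kB; first by rewrite eqxx.
apply/negbTE/negP => /eqP E.
by move: kB; rewrite -E finset.in_set1 eqxx.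
Qed.

Lemma part_sum (R : realType) (K : nat) (k0 l0 : 'I_K) (G : 'I_K -> {set 'I_K} -> R) :
  \sum_k G k (blk k0 l0 k) =
  \sum_(J in basic_partition k0 l0) \sum_(k in J) G k J.
Proof.
rewrite (partition_big (blk k0 l0) (mem (basic_partition k0 l0))) /=; last first.
  by move=> k _; exact: blk_in.
apply: eq_bigr => J JP.
apply: eq_big => [k|k]; last by move/eqP ->.
by rewrite blk_eq.
Qed.
Local Open Scope classical_set_scope.
Section Helpers.
Variables (R : realType) (n : nat).
Notation vec := 'rV[R]_n.

Lemma dotvDl (u w v : vec) : dotv (u + w) v = dotv u v + dotv w v.
Proof. by rewrite /dotv -big_split /=; apply: eq_bigr => i _; rewrite mxE mulrDl. Qed.

Lemma dotv0l (v : vec) : dotv 0 v = 0.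
Proof. by rewrite /dotv big1 // => i _; rewrite mxE mul0r. Qed.

Lemma dotvDr (v u w : vec) : dotv v (u + w) = dotv v u + dotv v w.
Proof. by rewrite /dotv -big_split /=; apply: eq_bigr => i _; rewrite mxE mulrDr. Qed.

Lemma dotv0r (v : vec) : dotv v 0 = 0.
Proof. by rewrite /dotv big1 // => i _; rewrite mxE mulr0. Qed.

Lemma dotvZr (v u : vec) a : dotv v (a *: u) = a * dotv v u.
Proof. by rewrite /dotv mulr_sumr; apply: eq_bigr => i _; rewrite mxE mulrCA. Qed.

Lemma dotv_suml (I : Type) (r : seq I) (P : pred I) (u : I -> vec) v :
  dotv (\sum_(i <- r | P i) u i) v = \sum_(i <- r | P i) dotv (u i) v.
Proof. exact: (big_morph (fun w => dotv w v) (fun a b => dotvDl a b v) (dotv0l v)). Qed.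

Lemma dotv_sumr (I : Type) (r : seq I) (P : pred I) (u : I -> vec) v :
  dotv v (\sum_(i <- r | P i) u i) = \sum_(i <- r | P i) dotv v (u i).
Proof. exact: (big_morph (fun w => dotv v w) (fun a b => dotvDr v a b) (dotv0r v)). Qed.

Lemma dotv_gt0 (d : vec) : d != 0 -> 0 < dotv d d.
Proof.
have mul_self_ge0 : forall y : R, 0 <= y * y by move=> y; rewrite -expr2 sqr_ge0.
move=> dn0; have ge0 : 0 <= dotv d d by apply: sumr_ge0 => i _; exact: mul_self_ge0.
rewrite lt_def ge0 andbT; apply/negP => /eqP H.
have H2 := psumr_eq0P (fun i _ => mul_self_ge0 (d 0 i)) H.
move/negP: dn0; apply; apply/eqP/matrixP => i j; rewrite mxE ord1.
by have /eqP := H2 j isT; rewrite mulf_eq0 orbb => /eqP.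
Qed.

Lemma continuous_dotv (d : vec) : continuous (dotv d).
Proof.
rewrite /dotv; move=> x.
elim: (index_enum _) => [|i r IH].
  rewrite (_ : (fun _ => _) = fun=> 0); last by apply: funext => y; rewrite big_nil.
  exact: cst_continuous.
rewrite (_ : (fun _ => _) = (fun y : vec => d 0 i * y 0 i) + (fun y => \sum_(j <- r) d 0 j * y 0 j)); last first.
  by apply: funext => y; rewrite big_cons.
apply: continuousD => //.
apply: continuousM; first exact: cst_continuous.
exact: coord_continuous.
Qed.

Lemma sub_conv (A : set vec) : A `<=` conv_hull A.
Proof.
move=> a Aa; exists 1%N, (fun=> 1), (fun=> a); split => //; split.
  by rewrite big_ord1.
by split => //; rewrite big_ord1 scale1r.
Qed.

Lemma sub_clconv (A : set vec) : A `<=` clconv A.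
Proof. by move=> a /sub_conv; exact: subset_closure. Qed.

Lemma clconv_lbR (A : set vec) d r x :
  (forall a, A a -> r <= dotv d a) -> clconv A x -> r <= dotv d x.
Proof.
move=> Hlb; rewrite /clconv.
have cH : closed (dotv d @^-1` [set y | r <= y]).
  apply: preimage_closed; last exact: closed_ge.
  by move=> y _; exact: continuous_dotv.
have sub : conv_hull A `<=` dotv d @^-1` [set y | r <= y].
  move=> y [m [w [p [w0 [w1 [pA ->]]]]]] /=.
  rewrite dotv_sumr (_ : r = \sum_(i < m) w i * r); last by rewrite -mulr_suml w1 mul1r.
  apply: ler_sum => i _; rewrite dotvZr; apply: ler_wpM2l => //; exact: Hlb.
move=> cx; have := closure_subset sub cx.
by rewrite -(proj1 (closure_id _) cH).
Qed.

Lemma clconv_lb (P : vec -> Prop) (A : set vec) d x :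
  A `<=` P -> clconv A x ->
  (ereal_inf [set e | exists v, P v /\ e = (dotv d v)%:E] <= (dotv d x)%:E)%E.
Proof.
move=> AP cx.
set S := [set e | _].
have lb : forall a, A a -> (ereal_inf S <= (dotv d a)%:E)%E.
  by move=> a Aa; apply: ereal_inf_lbound; exists a; split => //; exact: AP.
case E : (ereal_inf S) => [r| |] //.
- rewrite lee_fin; apply: (@clconv_lbR A d r x _ cx) => a Aa.
  by have := lb a Aa; rewrite E lee_fin.
- exfalso; have := @clconv_lbR A 0 1 x _ cx.
  rewrite dotv0l ler10 => H; apply: notF; apply: H => a Aa.
  by have := lb a Aa; rewrite E.
- by rewrite leNye.
Qed.

End Helpers.
Lemma inf_sum_lb (R : realType) (T : eqType) (V : Type) (v0 : V) (r : seq T)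
  (P : T -> V -> Prop) (h : T -> V -> R) (a : R) :
  uniq r ->
  (forall i, exists b, forall v, P i v -> b <= h i v) ->
  (forall f : T -> V, (forall i, i \in r -> P i (f i)) -> a <= \sum_(i <- r) h i (f i)) ->
  (a%:E <= \sum_(i <- r) ereal_inf [set e | exists v, P i v /\ e = (h i v)%:E])%E.
Proof.
move=> ur Hb.
have [b Hb'] := choice Hb.
set g := fun i => ereal_inf [set e | exists v, P i v /\ e = (h i v)%:E].
have gb : forall i, ((b i)%:E <= g i)%E.
  by move=> i; apply: le_ereal_inf_tmp => e [v [Pv ->]]; rewrite lee_fin; exact: Hb'.
have gNy : forall i, g i != -oo%E.
  by move=> i; apply/negP => /eqP E; have := gb i; rewrite E.
have sNy : forall s : seq T, \sum_(i <- s) g i != -oo%E.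
  move=> s; apply/negP => /eqP E.
  have : ((\sum_(i <- s) b i)%:E <= \sum_(i <- s) g i)%E.
    by rewrite -sumEFin; apply: lee_sum => i _; exact: gb.
  by rewrite E.
elim: r ur a => [|i r IH] ur a Hf.
  by rewrite big_nil lee_fin; have := Hf (fun=> v0) (fun i (H : i \in [::]) => ltac:(by [])); rewrite big_nil.
move: ur => /= /andP[ni ur].
rewrite big_cons -/(g i).
have [[v Pv]|nex] := pselect (exists v, P i v); last first.
  rewrite /g (_ : [set e | _] = set0); last first.
    by apply/seteqP; split => // e [v [Pv _]]; apply: nex; exists v.
  by rewrite ereal_inf0 addye ?sNy // leey.
case E : (\sum_(j <- r) g j) => [t| |].
- have H1 : ((a - t)%:E <= g i)%E.
    apply: le_ereal_inf_tmp => e [w [Pw ->]]; rewrite lee_fin.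
    have : ((a - h i w)%:E <= t%:E)%E.
      rewrite -E; apply: IH => // f Hf'.
      pose f' := fun j => if j == i then w else f j.
      have := Hf f'; rewrite big_cons /f' eqxx.
      rewrite (eq_big_seq (fun j => h j (f j))); last first.
        by move=> j jr; case: eqP => // ji; move: ni; rewrite -ji jr.
      move=> H; rewrite lerBlDl; apply: H => j; rewrite in_cons.
      case: eqP => [->|_] //= jr; exact: Hf'.
    by rewrite lee_fin lerBlDr lerBlDl addrC.
  by have := leeD2r (t%:E) H1; rewrite -EFinD subrK.
- by rewrite addey ?gNy // leey.
- by move/eqP: (sNy r); rewrite E.
Qed.

Theorem corollary1 (R : realType) (n K : nat) (c : 'rV[R]_n)
  (m : 'I_K -> nat) (C : forall k : 'I_K, 'I_(m k) -> set 'rV[R]_n)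
  (lam : 'I_K -> 'rV[R]_n) (k0 l0 : 'I_K) :
  (2 <= K)%N ->
  (forall (k : 'I_K) (i : 'I_(m k)), compact (C k i)) ->
  (forall (k : 'I_K) (i : 'I_(m k)),
      convex_set (C k i : set (convex_lmodType 'rV[R]_n))) ->
  optimal_multipliers c (disj C) lam ->
  k0 != l0 ->
  let F := disj C in
  let Delta := (zBasic c F k0 l0 - zHR c F)%E in
  let Lval := Lpart F (basic_partition k0 l0)
                (fun J => \sum_(k in J) lam k) in
  (Lval - LR c F lam <= Delta)%E /\ (0 <= Lval - LR c F lam)%E.
Proof.
move=> K2 Ccpt Ccvx [zfin zE] k0l0 F Delta Lval.
rewrite -/F in zfin zE.
set z := zHR c F in zfin zE *.
have [x0 Hx0] : exists x, forall k, clconv (F k) x.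
  apply: contrapT => nex; move: zfin.
  rewrite /z /zHR (_ : [set e | _] = set0) ?ereal_inf0 //.
  apply/seteqP; split => // e [x [v [Hv _]]]; apply: nex; exists x => k.
  by rewrite (proj1 (Hv k)); exact: (proj2 (Hv k)).
have /choice [u Hu] : forall k, exists v, F k v.
  move=> k; apply: contrapT => nex.
  have := @clconv_lbR R n (F k) 0 1 x0 _ (Hx0 k).
  rewrite dotv0l ler10 => H; exfalso; apply: notF; apply: H => a Fa.
  by exfalso; apply: nex; exists a.
have zHRl : forall x v, (forall k, clconv (F k) (v k)) ->
    (z <= (dotv (c - \sum_(k < K) lam k) x + \sum_(k < K) dotv (lam k) (v k))%:E)%E.
  move=> x v Hv; rewrite zE; apply: ereal_inf_lbound; exists x, v; split => //.
set zr := fine z.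
have zEr : z = zr%:E by rewrite /zr fineK.
have cE : c = \sum_(k < K) lam k.
  apply/eqP; rewrite -subr_eq0; apply: contrapT => /negP dn0.
  set d := c - _ in dn0.
  have Dpos := dotv_gt0 dn0.
  set s := \sum_(k < K) dotv (lam k) x0.
  have := zHRl (((zr - 1 - s) / dotv d d) *: d) (fun=> x0) Hx0.
  rewrite -/d -/s dotvZr divfK ?gt_eqF // zEr lee_fin; lra.
have LRz : forall v, (forall k, F k (v k)) ->
    (z <= (\sum_(k < K) dotv (lam k) (v k))%:E)%E.
  move=> v Hv; have := zHRl 0 v (fun k => sub_clconv (Hv k)).
  by rewrite dotv0r add0r.
have LRge : (z <= LR c F lam)%E.
  apply: le_ereal_inf_tmp => e [x [v [Hv ->]]].
  exact: zHRl x v (fun k => sub_clconv (Hv k)).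
have LRle : forall v, (forall k, F k (v k)) ->
    (LR c F lam <= (\sum_(k < K) dotv (lam k) (v k))%:E)%E.
  move=> v Hv; apply: ereal_inf_lbound; exists 0, v; split => //.
  by rewrite dotv0r add0r.
have [l LRE] : exists l, LR c F lam = l%:E.
  case E : (LR c F lam) => [l| |]; first by exists l.
  - by have := LRle u Hu; rewrite E.
  - by have := LRge; rewrite E zEr.
have LvalB : (Lval <= zBasic c F k0 l0)%E.
  apply: le_ereal_inf_tmp => e [x [Hx1 [Hx2 ->]]].
  apply: (@le_trans _ _ (\sum_(J in basic_partition k0 l0)
                           (dotv (\sum_(k in J) lam k) x)%:E)%E).
    apply: lee_sum => J.
    rewrite /basic_partition finset.in_setU finset.in_set1
      => /orP[/imsetP[j jB ->]|/eqP ->].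
      apply: (@clconv_lb R n _ (F j)); last first.
        move: jB; rewrite finset.in_setC finset.in_set2 negb_or => /andP[j0 j1].
        exact: Hx1.
      by move=> v Fv k; rewrite finset.in_set1 => /eqP ->.
    apply: (@clconv_lb R n _ (F k0 `&` F l0)) => //.
    by move=> v [F0 F1] k; rewrite finset.in_set2 => /orP[/eqP->|/eqP->].
  rewrite sumEFin lee_fin.
  have PS := part_sum k0 l0 (fun k _ => dotv (lam k) x); rewrite /= in PS.
  under eq_bigr => J _ do rewrite dotv_suml.
  by rewrite -PS -dotv_suml -cE.
have LvalA : (l%:E <= Lval)%E.
  rewrite /Lval /Lpart -big_enum /=.
  have := @inf_sum_lb R ({set 'I_K} : eqType) 'rV[R]_n 0 (enum (basic_partition k0 l0)) (fun J v => forall k, k \in J -> F k v)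
            (fun J v => dotv (\sum_(k in J) lam k) v) l.
  move=> H; apply: H.
  - exact: enum_uniq.
  - move=> J; exists (zr - \sum_(k < K | k \notin J) dotv (lam k) (u k)) => v Hv.
    have := LRz (fun k => if k \in J then v else u k).
    have H : forall k, F k (if k \in J then v else u k).
      by move=> k; case: ifP => kJ; [exact: Hv | exact: Hu].
    move=> /(_ H); rewrite zEr lee_fin (bigID (mem J)) /=.
    rewrite (eq_bigr (fun k => dotv (lam k) v)); last by move=> k ->.
    rewrite [X in _ + X](eq_bigr (fun k => dotv (lam k) (u k))); last first.
      by move=> k /negbTE ->.
    rewrite dotv_suml; lra.
  - move=> f Hf.
    have Hv : forall k, F k (f (blk k0 l0 k)).
      move=> k; apply: Hf; first by rewrite mem_enum; exact: blk_in.
      exact: blk_self.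
    have := LRle _ Hv; rewrite LRE lee_fin.
    have PS := part_sum k0 l0 (fun k J => dotv (lam k) (f J)); rewrite /= in PS.
    rewrite PS => H; rewrite big_enum /=.
    under eq_bigr => J _ do rewrite dotv_suml.
    exact: H.
rewrite LRE; split.
  by rewrite /Delta; apply: leeB LvalB _; rewrite -LRE.
by rewrite suber_ge0.
Qed.
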